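(* Let $(M,J,g)$ be a quasi-K\''ahler manifold with Norden metric and let $\nabla'$ be the connection with totally skew-symmetric torsion $\nabla'_xy=\nabla_xy+Q(x,y)$, where $Q(x,y)=\frac14\{(\nabla_xJ)Jy-(\nabla_{Jx}J)y-2(\nabla_yJ)Jx\}$. Suppose the torsion of $\nabla'$ is parallel with respect to $\nabla'$ and the curvature tensor of $\nabla'$ is a K\''ahler tensor. Then the curvature tensor $R$ of the Levi-Civita connection satisfies $$R(x,y,Jz,Jw)+R(x,y,z,w)=g\bigl(Q(x,y),(\nabla_{Jz}J)w+(\nabla_wJ)Jz\bigr)$$ for all vector fields $x,y,z,w$.
   Context: An almost complex manifold with Norden metric $(M,J,g)$ has $J^2=-\mathrm{Id}$, $g(Jx,Jy)=-g(x,y)$; $\nabla$ is the Levi-Civita connection of $g$, $F(x,y,z)=g((\nabla_xJ)y,z)$, and the manifold is quasi-K\''ahler if $F(x,y,z)+F(y,z,x)+F(z,x,y)=0$. The torsion of $\nabla'$ is $T(x,y)=\nabla'_xy-\nabla'_yx-[x,y]$. For a connection $D$, $R^D(x,y)z=D_xD_yz-D_yD_xz-D_{[x,y]}z$ and $R^D(x,y,z,w)=g(R^D(x,y)z,w)$; $R$ is the curvature of $\nabla$. A $(0,4)$-tensor $L$ is a K\''ahler tensor if $L(x,y,z,w)=-L(y,x,z,w)=-L(x,y,w,z)$, $L(x,y,z,w)+L(y,z,x,w)+L(z,x,y,w)=0$, and $L(x,y,Jz,Jw)=-L(x,y,z,w)$. *)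

(* Defs.v *)
(* Algebraic (Lie–Rinehart style) model of the calculus of
   vector fields on a manifold: F = ring of smooth functions, X = F-module of
   smooth vector fields, der x f = x(f), br = Lie bracket. *)
From HB Require Import structures.
From mathcomp Require Import all_boot all_order all_algebra.
Set Implicit Arguments. Unset Strict Implicit. Unset Printing Implicit Defensive.
Import Order.TTheory GRing.Theory Num.Theory.
Local Open Scope ring_scope.

Section VF.
Variables (F : comUnitRingType) (X : lmodType F).
Variables (der : X -> F -> F) (br : X -> X -> X) (g : X -> X -> F).

Definition is_derivation_action : Prop :=
  [/\ forall x f h, der x (f + h) = der x f + der x h,
      forall x f h, der x (f * h) = der x f * h + f * der x h,
      forall x y f, der (x + y) f = der x f + der y f &
      forall (a : F) x f, der (a *: x) f = a * der x f].

Definition is_lie_bracket : Prop :=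
  [/\ forall x y, br x y = - br y x,
      forall x y z, br x (y + z) = br x y + br x z,
      forall x y (a : F), br x (a *: y) = a *: br x y + der x a *: y,
      forall x y z, br x (br y z) + br y (br z x) + br z (br x y) = 0 &
      forall x y f, der (br x y) f = der x (der y f) - der y (der x f)].

Definition is_metric : Prop :=
  [/\ forall x y, g x y = g y x,
      forall x y z, g (x + y) z = g x z + g y z,
      forall (a : F) x y, g (a *: x) y = a * g x y &
      forall y, (forall x, g x y = 0) -> y = 0].

Definition is_connection (D : X -> X -> X) : Prop :=
  [/\ forall x y z, D (x + y) z = D x z + D y z,
      forall (a : F) x y, D (a *: x) y = a *: D x y,
      forall x y z, D x (y + z) = D x y + D x z &
      forall x (a : F) y, D x (a *: y) = der x a *: y + a *: D x y].

Definition is_levi_civita (D : X -> X -> X) : Prop :=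
  [/\ is_connection D,
      forall x y, D x y - D y x = br x y &
      forall x y z, der x (g y z) = g (D x y) z + g y (D x z)].

Definition is_norden (J : X -> X) : Prop :=
  [/\ forall x y, J (x + y) = J x + J y,
      forall (a : F) x, J (a *: x) = a *: J x,
      forall x, J (J x) = - x &
      forall x y, g (J x) (J y) = - g x y].

Definition covJ (D : X -> X -> X) (J : X -> X) (x y : X) : X :=
  D x (J y) - J (D x y).

Definition Ften (D : X -> X -> X) (J : X -> X) (x y z : X) : F :=
  g (covJ D J x y) z.

Definition is_quasi_kahler (D : X -> X -> X) (J : X -> X) : Prop :=
  forall x y z, Ften D J x y z + Ften D J y z x + Ften D J z x y = 0.

Definition Qten (D : X -> X -> X) (J : X -> X) (x y : X) : X :=
  (4%:R)^-1 *: (covJ D J x (J y) - covJ D J (J x) y - 2%:R *: covJ D J y (J x)).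

Definition nablaP (D : X -> X -> X) (J : X -> X) (x y : X) : X :=
  D x y + Qten D J x y.

Definition torsion (D : X -> X -> X) (x y : X) : X := D x y - D y x - br x y.

Definition torsion_parallel (D : X -> X -> X) : Prop :=
  forall x y z,
    D x (torsion D y z) - torsion D (D x y) z - torsion D y (D x z) = 0.

Definition curv (D : X -> X -> X) (x y z : X) : X :=
  D x (D y z) - D y (D x z) - D (br x y) z.

Definition curv4 (D : X -> X -> X) (x y z w : X) : F := g (curv D x y z) w.

Definition is_kahler_tensor (J : X -> X) (L : X -> X -> X -> X -> F) : Prop :=
  [/\ forall x y z w, L x y z w = - L y x z w,
      forall x y z w, L x y z w = - L x y w z,
      forall x y z w, L x y z w + L y z x w + L z x y w = 0 &
      forall x y z w, L x y (J z) (J w) = - L x y z w].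

End VF.

(* Main.v *)
Require Import Defs.
From HB Require Import structures.
From mathcomp Require Import all_boot all_order all_algebra ring.
Import GRing.Theory.
Local Open Scope ring_scope.

Lemma addfN (U V : zmodType) (f : U -> V) :
  (forall x y, f (x + y) = f x + f y) -> forall x, f (- x) = - f x.
Proof.
move=> fD x.
have f0 : f 0 = 0 by apply: (addrI (f 0)); rewrite -fD !addr0.
apply/eqP; rewrite -addr_eq0 addrC -fD addrN f0.
done.
Qed.

Lemma zero_by2 (F : comUnitRingType) (k1 k2 a1 a2 b : F) :
  a1 = 0 -> a2 = 0 -> b = k1 * a1 + k2 * a2 -> b = 0.
Proof. by move=> -> -> ->; rewrite !mulr0 addr0. Qed.

Lemma eq0 (F : comUnitRingType) (a b : F) : a = b -> a - b = 0.
Proof. by move=> ->; rewrite subrr. Qed.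

Lemma by0 (F : comUnitRingType) (a b : F) : a - b = 0 -> a = b.
Proof. exact: subr0_eq. Qed.

Arguments eq0 {F a b}.
Arguments by0 {F a b}.

Section Pf.
Variables (F : comUnitRingType) (X : lmodType F)
  (der : X -> F -> F) (br : X -> X -> X) (g : X -> X -> F)
  (nabla : X -> X -> X) (J : X -> X).
Hypotheses (u2 : (2%:R : F) \is a GRing.unit)
  (hder : is_derivation_action der)
  (hbr : is_lie_bracket der br)
  (hg : is_metric g)
  (hlc : is_levi_civita der br g nabla)
  (hJ : is_norden g J)
  (hqk : is_quasi_kahler g nabla J)
  (hpar : torsion_parallel br (nablaP nabla J))
  (hkt : is_kahler_tensor J (curv4 br g (nablaP nabla J))).

Local Notation Q := (Qten nabla J).
Local Notation P := (covJ nabla J).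
Local Notation N' := (nablaP nabla J).

Lemma gsym x y : g x y = g y x. Proof. by case: hg. Qed.
Lemma gDl x y z : g (x + y) z = g x z + g y z. Proof. by case: hg. Qed.
Lemma gZl (a : F) x y : g (a *: x) y = a * g x y. Proof. by case: hg. Qed.
Lemma gNl x y : g (- x) y = - g x y.
Proof. move: x; apply: (@addfN X F (fun x => g x y)) => a b; exact: gDl. Qed.
Lemma gNr x y : g x (- y) = - g x y.
Proof. by rewrite gsym gNl gsym. Qed.
Lemma gDr x y z : g x (y + z) = g x y + g x z.
Proof. by rewrite gsym gDl !(gsym x). Qed.
Lemma g0l y : g 0 y = 0.
Proof. by rewrite -(subrr (0:X)) gDl gNl subrr. Qed.
Lemma eqv u v : (forall w, g u w = g v w) -> u = v.
Proof.
move=> H; apply: subr0_eq; case: hg => _ _ _ nd; apply: nd => w.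
by rewrite gsym gDl gNl H subrr.
Qed.

Lemma nDl x y z : nabla (x + y) z = nabla x z + nabla y z.
Proof. by case: hlc => -[]. Qed.
Lemma nDr x y z : nabla x (y + z) = nabla x y + nabla x z.
Proof. by case: hlc => -[]. Qed.
Lemma nNr x y : nabla x (- y) = - nabla x y.
Proof. move: y; apply: (@addfN X X (nabla x)) => a b; exact: nDr. Qed.
Lemma nNl x y : nabla (- x) y = - nabla x y.
Proof. move: x; apply: (@addfN X X (nabla ^~ y)) => a b; exact: nDl. Qed.
Lemma nswap x y : nabla y x = nabla x y - br x y.
Proof. case: hlc => _ h _; by rewrite -h opprB addrC subrK. Qed.
Lemma nmet x y z : der x (g y z) = g (nabla x y) z + g y (nabla x z).
Proof. by case: hlc. Qed.

Lemma JD x y : J (x + y) = J x + J y. Proof. by case: hJ. Qed.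
Lemma JJ x : J (J x) = - x. Proof. by case: hJ. Qed.
Lemma gJJ x y : g (J x) (J y) = - g x y. Proof. by case: hJ. Qed.
Lemma JN x : J (- x) = - J x. Proof. move: x; apply: (@addfN X X J) => a b; exact: JD. Qed.
Lemma gJ x y : g (J x) y = g x (J y).
Proof. by rewrite -[RHS]opprK -gJJ JJ gNr opprK. Qed.

Lemma derD x f h : der x (f + h) = der x f + der x h. Proof. by case: hder. Qed.
Lemma derN x f : der x (- f) = - der x f. Proof. move: f; apply: (@addfN F F (der x)) => a b; exact: derD. Qed.


Lemma zero_by3 (k1 k2 k3 a1 a2 a3 b : F) :
  a1 = 0 -> a2 = 0 -> a3 = 0 -> b = k1 * a1 + k2 * a2 + k3 * a3 -> b = 0.
Proof. by move=> -> -> -> ->; rewrite !mulr0 !addr0. Qed.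

Lemma u4 : (4%:R : F) \is a GRing.unit.
Proof. by rewrite (natrM F 2 2) unitrM u2. Qed.

Lemma PDl a b c : P (a + b) c = P a c + P b c.
Proof. apply: eqv => w; rewrite /covJ !nDl JD !(gDl, gNl); ring. Qed.
Lemma PDr a b c : P a (b + c) = P a b + P a c.
Proof. apply: eqv => w; rewrite /covJ JD !nDr JD !(gDl, gNl); ring. Qed.
Lemma PNr a b : P a (- b) = - P a b.
Proof. move: b; apply: (@addfN X X (P a)) => u v; exact: PDr. Qed.
Lemma PNl a b : P (- a) b = - P a b.
Proof. move: a; apply: (@addfN X X (P ^~ b)) => u v; exact: PDl. Qed.
Lemma PJ a b : P a (J b) = - J (P a b).
Proof. apply: eqv => w; rewrite /covJ !(JJ, nNr, JD, JN) !(gDl, gNl); ring. Qed.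

Lemma skewJ a b c : g (P a b) (J c) + g (P a c) (J b) = 0.
Proof.
have h1 := nmet a (J b) (J c); have h2 := nmet a b c.
rewrite gJJ derN (gsym (J b)) in h1; rewrite (gsym b (nabla a c)) in h2.
rewrite /covJ !(gDl, gNl) !gJJ.
apply: (@zero_by2 F (-1) (-1) _ _ _ (eq0 h1) (eq0 h2)); ring.
Qed.

Lemma Fsym a b c : g (P a b) c = g (P a c) b.
Proof.
have h := skewJ a b (J c).
rewrite JJ gNr PJ gNl gJJ in h.
apply: by0; apply: (@zero_by2 F (-1) 0 _ 0 _ h (erefl 0)); ring.
Qed.

Lemma FJr a b c : g (P a b) (J c) = - g (P a (J b)) c.
Proof. by rewrite -gJ PJ gNl opprK. Qed.

Lemma QKe a b c : g (P a b) c + g (P b c) a + g (P c a) b = 0.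
Proof. exact: hqk. Qed.

Lemma gQ a b c : g (Q a b) c = (4%:R)^-1 *
   (g (P a (J b)) c - g (P (J a) b) c - 2%:R * g (P b (J a)) c).
Proof. rewrite /Qten gZl !(gDl, gNl, gZl); ring. Qed.

Lemma skew23 a b c : g (Q a b) c + g (Q a c) b = 0.
Proof.
rewrite !gQ (Fsym a (J c) b) FJr (Fsym (J a) c b).
have h := QKe (J a) b c; rewrite (Fsym b c (J a)) in h.
apply: (@zero_by2 F (- 2%:R * (4%:R)^-1) 0 _ 0 _ h (erefl 0)); ring.
Qed.

Lemma skew12 a b c : g (Q a b) c + g (Q b a) c = 0.
Proof.
rewrite !gQ.
have h1 := QKe a (J b) c; rewrite (Fsym (J b) c a) (FJr c a b) in h1.
have h2 := QKe (J a) b c; rewrite (Fsym b c (J a)) in h2.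
apply: (@zero_by2 F (- (4%:R)^-1) (- (4%:R)^-1) _ _ _ h1 h2); ring.
Qed.

Lemma QskewV a b : Q b a = - Q a b.
Proof. apply: eqv => w; rewrite gNl; apply: by0; rewrite opprK addrC; exact: skew12. Qed.
Lemma qs23 u v t : g (Q u v) t = - g (Q u t) v.
Proof. apply: by0; rewrite opprK; exact: skew23. Qed.
Lemma qcyc u v t : g (Q u v) t = g (Q v t) u.
Proof. by rewrite (qs23 v t u) (QskewV u v) gNl opprK. Qed.

Lemma QDl a b c : Q (a + b) c = Q a c + Q b c.
Proof. apply: eqv => w; rewrite gDl !gQ JD !(PDl, PDr) !gDl; ring. Qed.
Lemma QDr a b c : Q a (b + c) = Q a b + Q a c.
Proof. apply: eqv => w; rewrite gDl !gQ JD !(PDl, PDr) !gDl; ring. Qed.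
Lemma QNr a b : Q a (- b) = - Q a b.
Proof. move: b; apply: (@addfN X X (Q a)) => u v; exact: QDr. Qed.
Lemma QNl a b : Q (- a) b = - Q a b.
Proof. move: a; apply: (@addfN X X (Q ^~ b)) => u v; exact: QDl. Qed.

Lemma QJ a b : Q a (J b) = J (Q a b) - P a b.
Proof.
apply: eqv => w; rewrite gDl gNl gJ !gQ !FJr !JJ !PNr !gNl.
have h1 := QKe (J a) (J b) w.
rewrite (Fsym (J b) w (J a)) (FJr w (J a) b) JJ PNr gNl opprK in h1.
have h2 := QKe a b w; rewrite (Fsym b w a) in h2.
have hc : 1 - 4%:R * (4%:R)^-1 = 0 :> F by rewrite mulrV ?u4 // subrr.
apply: by0.
apply: (@zero_by3 (- 2%:R * (4%:R)^-1) (2%:R * (4%:R)^-1) (g (P a b) w) _ _ _ _ h1 h2 hc); ring.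
Qed.


Lemma TQ a b : torsion br N' a b = Q a b + Q a b.
Proof. apply: eqv => w; rewrite /torsion /nablaP (nswap a b) (QskewV a b) !(gDl, gNl); ring. Qed.

Lemma parN x y z w : g (nabla x (Q y z)) w = - g (Q x (Q y z)) w
  + g (Q (nabla x y) z) w + g (Q (Q x y) z) w + g (Q y (nabla x z)) w
  + g (Q y (Q x z)) w.
Proof.
have h := congr1 (g ^~ w) (hpar x y z); rewrite g0l /= in h.
rewrite !TQ /nablaP !(nDr, QDr, QDl) !(gDl, gNl) in h.
apply: by0; apply: (mulrI u2); rewrite mulr0.
apply: (@zero_by2 F 1 0 _ 0 _ h (erefl 0)); ring.
Qed.

Lemma S1a a b c d : curv4 br g N' a b c d = curv4 br g nabla a b c d
  + 2%:R * g (Q (Q a b) c) d + g (Q b (Q a c)) d - g (Q a (Q b c)) d.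
Proof.
rewrite /curv4 /curv /nablaP !(nDr, QDr) !(gDl, gNl) (parN a b c d) (parN b a c d).
rewrite (nswap a b) (QskewV a b) !(QDl, QNl) !(gDl, gNl); ring.
Qed.

Lemma bianchi a b c d : curv4 br g nabla a b c d + curv4 br g nabla b c a d
  + curv4 br g nabla c a b d = 0.
Proof.
have jac : br a (br b c) + br b (br c a) + br c (br a b) = 0 by case: hbr.
have hj := congr1 (g ^~ d) jac; rewrite g0l /= !gDl in hj.
rewrite /curv4 /curv (nswap b c) (nswap c a) (nswap a b).
rewrite (nswap a (br b c)) (nswap b (br c a)) (nswap c (br a b)) !(nDr, nNr).
rewrite !(gDl, gNl).
apply: (@zero_by2 F 1 0 _ 0 _ hj (erefl 0)); ring.
Qed.

Lemma S1 a b c d : curv4 br g N' a b c d = curv4 br g nabla a b c d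
  + g (Q a d) (Q b c) - g (Q b d) (Q a c) + 2%:R * g (Q a b) (Q c d).
Proof.
rewrite S1a (qcyc (Q a b) c d) (gsym (Q c d)) (qs23 b (Q a c) d) (qs23 a (Q b c) d); ring.
Qed.

Lemma bQ a b c d : g (Q a d) (Q b c) - g (Q b d) (Q a c) + g (Q a b) (Q c d) = 0.
Proof.
have kb : curv4 br g N' a b c d + curv4 br g N' b c a d + curv4 br g N' c a b d = 0
  by case: hkt.
have bi := bianchi a b c d.
rewrite !S1 (QskewV a c) (QskewV a b) (QskewV b c) !(gNl, gNr)
  (gsym (Q b c) (Q a d)) (gsym (Q c d) (Q a b)) (gsym (Q a c) (Q b d)) in kb.
apply: (mulrI u4); rewrite mulr0.
apply: (@zero_by2 F 1 (-1) _ _ _ kb bi); ring.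
Qed.

Lemma S1' a b c d : curv4 br g N' a b c d = curv4 br g nabla a b c d + g (Q a b) (Q c d).
Proof.
rewrite S1; apply: by0.
apply: (@zero_by2 F 1 0 _ 0 _ (bQ a b c d) (erefl 0)); ring.
Qed.

Lemma S5 x y z w : g (Q x y) (Q (J z) (J w)) + g (Q x y) (Q z w)
  = - g (Q x y) (P (J z) w + P w (J z)).
Proof.
rewrite (QJ (J z) w) (QskewV w (J z)) (QJ w z) PJ (QskewV z w).
rewrite !(JD, JN, JJ, opprK) !(gDr, gNr); ring.
Qed.

Lemma main x y z w :
  curv4 br g nabla x y (J z) (J w) + curv4 br g nabla x y z w =
  g (Q x y) (P (J z) w + P w (J z)).
Proof.
have k : curv4 br g N' x y (J z) (J w) = - curv4 br g N' x y z w by case: hkt.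
rewrite !S1' in k; have s5 := S5 x y z w.
apply: by0; apply: (@zero_by2 F 1 (-1) _ _ _ (eq0 k) (eq0 s5)); ring.
Qed.

End Pf.

Theorem corollary5p3 (F : comUnitRingType) (X : lmodType F)
  (der : X -> F -> F) (br : X -> X -> X) (g : X -> X -> F)
  (nabla : X -> X -> X) (J : X -> X) :
  (2%:R : F) \is a GRing.unit ->
  is_derivation_action der ->
  is_lie_bracket der br ->
  is_metric g ->
  is_levi_civita der br g nabla ->
  is_norden g J ->
  is_quasi_kahler g nabla J ->
  torsion_parallel br (nablaP nabla J) ->
  is_kahler_tensor J (curv4 br g (nablaP nabla J)) ->
  forall x y z w : X,
    curv4 br g nabla x y (J z) (J w) + curv4 br g nabla x y z w =
    g (Qten nabla J x y) (covJ nabla J (J z) w + covJ nabla J w (J z)).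
Proof.
move=> *; eapply main; eassumption.
Qed.
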